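(* Let $n$, $r$ and $k$ be positive integers with $n\ge 2r+1$, and suppose $\binom{n-r}{r}\ge k$ (so that $\gamma_{\times k,t}(K(n,r))$ is defined). Then $$\gamma_{\times k,t}(K(n,r))\ \ge\ \gamma_{\times k,t}(K(n+1,r)).$$
   Context: For integers $n\ge 2r$, the Kneser graph $K(n,r)$ has as vertices the $r$-element subsets of $[n]=\{1,\dots,n\}$, two vertices being adjacent iff they are disjoint sets. For a graph $G$ and positive integer $k$, a set $D\subseteq V(G)$ is a $k$-tuple total dominating set if $|N_G(u)\cap D|\ge k$ for every $u\in V(G)$, where $N_G(u)$ is the open neighborhood; $\gamma_{\times k,t}(G)$ is the minimum cardinality of such a set. It is defined only when the minimum degree of $G$ is at least $k$; the minimum degree of $K(n,r)$ is $\binom{n-r}{r}$. *)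

(* Defs.v *)
From mathcomp Require Import all_boot.
Unset Printing Implicit Defensive.

(* Kneser graph K(n,r): vertices are r-subsets of [n] = 'I_n (elements 0..n-1),
   adjacency = disjointness (for r >= 1 this is irreflexive). *)
Definition kneser_vertices (n r : nat) : {set {set 'I_n}} :=
  [set A : {set 'I_n} | #|A| == r].

Definition kneser_adj (n : nat) (A B : {set 'I_n}) : bool := [disjoint A & B].

Definition kneser_nbhd (n r : nat) (u : {set 'I_n}) : {set {set 'I_n}} :=
  [set v in kneser_vertices n r | kneser_adj n u v].

Definition is_ktuple_tds (n r k : nat) (D : {set {set 'I_n}}) : bool :=
  (D \subset kneser_vertices n r) &&
  [forall u : {set 'I_n}, (u \in kneser_vertices n r) ==> (k <= #|kneser_nbhd n r u :&: D|)].

(* gamma_{x k, t}(K(n,r)): minimum cardinality of a k-tuple total dominating set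
   (default value #|V| is only relevant when no such set exists). *)
Definition gamma_ktuple_total (n r k : nat) : nat :=
  \big[minn/#|kneser_vertices n r|]_(D : {set {set 'I_n}} | is_ktuple_tds n r k D) #|D|.

(* Main.v *)
Require Import Defs.
From mathcomp Require Import all_boot.

Lemma exists_superset (T : finType) m (A : {set T}) :
  #|A| <= m -> m <= #|T| -> exists2 B : {set T}, A \subset B & #|B| = m.
Proof.
elim: m A => [|m IH] A hA hm.
  exists A => //; by move: hA; rewrite leqn0 => /eqP.
case: (ltngtP #|A| m.+1) hA => // [hlt _|heq _]; last by exists A.
have [B AB cB] := IH A hlt (ltnW hm).
case: (pickP [pred x | x \notin B]) => [x /= xB|H]; last first.
  have eB : B = setT by apply/setP => x; move: (H x) => /= /negbFE ->; rewrite inE.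
  by move: hm; rewrite -cB eB cardsT ltnn.
exists (x |: B); first by apply: (subset_trans AB); apply: subsetUr.
by rewrite cardsU1 xB cB.
Qed.

Definition liftn (n : nat) (A : {set 'I_n}) : {set 'I_n.+1} :=
  (widen_ord (leqnSn n)) @: A.

Lemma widen_inj n : injective (widen_ord (leqnSn n)).
Proof. by move=> x y /(congr1 val) /= /val_inj. Qed.

Lemma liftn_inj n : injective (@liftn n).
Proof. apply: imset_inj; exact: widen_inj. Qed.

Lemma liftn_card n A : #|@liftn n A| = #|A|.
Proof. apply: card_imset; exact: widen_inj. Qed.

Lemma lift_tds n r k (D : {set {set 'I_n}}) :
  r <= n -> is_ktuple_tds n r k D -> is_ktuple_tds n.+1 r k (@liftn n @: D).
Proof.
move=> rn /andP [DV Hdom]; apply/andP; split.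
  apply/subsetP => y /imsetP [A AD ->]; move/subsetP: DV => /(_ A AD).
  by rewrite !inE liftn_card.
apply/forallP => u; apply/implyP; rewrite inE => /eqP cu.
set u' := [set x : 'I_n | widen_ord (leqnSn n) x \in u].
have cu' : #|u'| <= r.
  rewrite -cu -(card_imset _ (@widen_inj n)); apply: subset_leq_card.
  by apply/subsetP => y /imsetP [x]; rewrite inE => xu ->.
have hr : r <= #|'I_n| by rewrite card_ord.
have [w u'w cw] := exists_superset _ _ _ cu' hr.
have := forallP Hdom w; rewrite inE cw eqxx /= => Hw.
apply: (leq_trans Hw).
rewrite -(card_imset _ (@liftn_inj n)); apply: subset_leq_card.
apply/subsetP => y /imsetP [v]; rewrite !inE => /andP [/andP [cv dwv] vD] ->.
rewrite liftn_card cv /=; apply/andP; split; last exact: imset_f.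
rewrite /kneser_adj disjoint_subset.
move: dwv; rewrite /kneser_adj disjoint_subset => /subsetP dwv.
apply/subsetP => z zu; rewrite inE; apply/negP => /imsetP [x xv ez].
have : x \in w by apply/(subsetP u'w); rewrite inE -ez.
by move/dwv; rewrite inE xv.
Qed.

Lemma full_tds n r k : k <= 'C(n - r, r) -> is_ktuple_tds n r k (kneser_vertices n r).
Proof.
move=> hk; apply/andP; split => //.
apply/forallP => u; apply/implyP; rewrite inE => /eqP cu.
suff -> : kneser_nbhd n r u :&: kneser_vertices n r =
          [set A : {set 'I_n} | A \subset ~: u & #|A| == r].
  rewrite cards_draws.
  have : #|u| + #|~: u| = n by rewrite cardsC card_ord.
  by rewrite cu => /(congr1 (subn^~ r)); rewrite addKn => ->.
apply/setP => A; rewrite !inE /kneser_adj disjoint_sym disjoints_subset.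
by case: (#|A| == r); rewrite ?andbF ?andbT.
Qed.

Lemma gamma_le n r k (E : {set {set 'I_n}}) :
  is_ktuple_tds n r k E -> gamma_ktuple_total n r k <= #|E|.
Proof.
move=> hE; rewrite /gamma_ktuple_total.
have : E \in index_enum {set {set 'I_n}} by rewrite mem_index_enum.
elim: (index_enum _) => // x s IH; rewrite inE big_cons.
case/predU1P => [<-|/IH]; first by rewrite hE geq_minl.
by case: ifP => // _ h; rewrite geq_min h orbT.
Qed.

Theorem theorem2p1 (n r k : nat) :
  0 < r -> 0 < k -> 2 * r + 1 <= n -> k <= 'C(n - r, r) ->
  gamma_ktuple_total (n.+1) r k <= gamma_ktuple_total n r k.
Proof.
move=> r0 k0 hn hk.
have rn : r <= n by apply: leq_trans hn; rewrite mul2n -addnn -addnA leq_addr.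
rewrite [X in _ <= X]/gamma_ktuple_total.
apply: (big_ind (fun x => gamma_ktuple_total n.+1 r k <= x)).
- apply: (leq_trans (gamma_le _ _ _ _ (lift_tds _ _ _ _ rn (full_tds n r k hk)))).
  by rewrite card_imset //; exact: liftn_inj.
- by move=> x y hx hy; rewrite leq_min hx hy.
- move=> D hD; apply: (leq_trans (gamma_le _ _ _ _ (lift_tds _ _ _ _ rn hD))).
  by rewrite card_imset //; exact: liftn_inj.
Qed.
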